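(* For $n\in\mathbb N$ let $a(n)=\lfloor n\varphi\rfloor$, $b(n)=\lfloor n\varphi^2\rfloor$, $m(n)=\lfloor\varphi n\rfloor-n+1$, $f(n)=b(n)$, $g(n)=b(n)-1$, $h(n)=2a(n)+n$. Then for every $k\in\mathbb N$: (i) $m(f(a(k)))=b(k)$; (ii) $m(f(b(k)))+1=b(a(k)+1)$; (iii) $m(g(a(k)))+1=b(k)$; (iv) $m(g(b(k)))+2=b(a(k)+1)$; (v) $m(h(a(k)))+3=b(a(k)+1)$; (vi) $m(h(b(k)))+2=b(b(k)+1)$.
   Context: $\mathbb N=\{1,2,\dots\}$, $\varphi=\frac{1+\sqrt5}{2}$ is the golden ratio. *)

(* Defs.v *)
From Stdlib Require Import Reals ZArith.
Open Scope R_scope.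

Definition phi : R := (1 + sqrt 5) / 2.

(* floor as an integer: Stdlib's Int_part r = up r - 1 = floor r *)
Definition floorR (x : R) : Z := Int_part x.

Definition a_ (n : Z) : Z := floorR (IZR n * phi).
Definition b_ (n : Z) : Z := floorR (IZR n * phi ^ 2).
Definition m_ (n : Z) : Z := (floorR (phi * IZR n) - n + 1)%Z.
Definition f_ (n : Z) : Z := b_ n.
Definition g_ (n : Z) : Z := (b_ n - 1)%Z.
Definition h_ (n : Z) : Z := (2 * a_ n + n)%Z.

(* Main.v *)
Require Import Defs.
From Stdlib Require Import Reals ZArith Lra Lia Psatz.


Open Scope R_scope.

Lemma fl x z : IZR z <= x < IZR z + 1 -> floorR x = z.
Proof. intros [H1 H2]. unfold floorR. symmetry. apply Int_part_spec. lra. Qed.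

Ltac go HA K := apply fl; repeat (rewrite plus_IZR || rewrite minus_IZR || rewrite mult_IZR); fold K; repeat rewrite HA; simpl; lra.

Lemma no_sq5 : forall n : nat, forall k m : Z, (Z.abs k <= Z.of_nat n)%Z -> (5*k*k = m*m)%Z -> k = 0%Z.
Proof.
  induction n as [|n IH]; intros k m Hk E; [lia|].
  assert (Hm : (m mod 5 = 0)%Z).
  { pose proof (Z.div_mod m 5 ltac:(lia)) as D. pose proof (Z.mod_pos_bound m 5 ltac:(lia)).
    set (q := (m/5)%Z) in *. set (r := (m mod 5)%Z) in *.
    assert (r = 0 \/ r = 1 \/ r = 2 \/ r = 3 \/ r = 4)%Z as C by lia.
    rewrite D in E.
    destruct C as [C|[C|[C|[C|C]]]]; rewrite C in E; try lia. }
  pose proof (Z.div_mod m 5 ltac:(lia)) as D. rewrite Hm, Z.add_0_r in D.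
  set (m' := (m/5)%Z) in *.
  assert (E2 : (k*k = 5*m'*m')%Z) by (rewrite D in E; lia).
  assert (Hk5 : (k mod 5 = 0)%Z).
  { pose proof (Z.div_mod k 5 ltac:(lia)) as D2. pose proof (Z.mod_pos_bound k 5 ltac:(lia)).
    set (q := (k/5)%Z) in *. set (r := (k mod 5)%Z) in *.
    assert (r = 0 \/ r = 1 \/ r = 2 \/ r = 3 \/ r = 4)%Z as C by lia.
    rewrite D2 in E2.
    destruct C as [C|[C|[C|[C|C]]]]; rewrite C in E2; try lia. }
  pose proof (Z.div_mod k 5 ltac:(lia)) as D2. rewrite Hk5, Z.add_0_r in D2.
  set (k' := (k/5)%Z) in *.
  assert (E3 : (5*k'*k' = m'*m')%Z) by (rewrite D2 in E2; lia).
  assert (k' = 0%Z) as H0.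
  { apply (IH k' m'); [|exact E3]. lia. }
  lia.
Qed.

Theorem lemma5p4 : forall k : Z, (1 <= k)%Z ->
  m_ (f_ (a_ k)) = b_ k /\
  (m_ (f_ (b_ k)) + 1)%Z = b_ (a_ k + 1) /\
  (m_ (g_ (a_ k)) + 1)%Z = b_ k /\
  (m_ (g_ (b_ k)) + 2)%Z = b_ (a_ k + 1) /\
  (m_ (h_ (a_ k)) + 3)%Z = b_ (a_ k + 1) /\
  (m_ (h_ (b_ k)) + 2)%Z = b_ (b_ k + 1).
Proof.
  intros k hk.
  set (s := sqrt 5).
  assert (Hs0 : 0 <= s) by apply sqrt_pos.
  assert (Hss : s * s = 5) by (apply sqrt_sqrt; lra).
  assert (Hsl : 2.236 < s) by nra.
  assert (Hsu : s < 2.2361) by nra.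
  assert (Hphi : phi = (1 + s)/2) by reflexivity.
  assert (Hp2 : phi * phi = phi + 1) by (rewrite Hphi; nra).
  assert (Hpl : 1.618 < phi) by lra.
  assert (Hpu : phi < 1.61805) by lra.
  set (K := IZR k).
  assert (HK : 1 <= K) by (apply IZR_le; exact hk).
  set (A := floorR (K * phi)).
  set (t := K * phi - IZR A).
  assert (HA : IZR A = K * phi - t) by (unfold t; ring).
  assert (Ht : 0 <= t < 1).
  { pose proof (base_Int_part (K*phi)). unfold t, A, floorR. lra. }
  assert (Ht0 : t <> 0).
  { intro H0. assert (E : IZR A = K * phi) by lra.
    assert (E2 : s * K = 2 * IZR A - K) by (rewrite E, Hphi; field).
    assert (E3 : IZR (5*k*k) = IZR ((2*A-k)*(2*A-k))).
    { rewrite !mult_IZR, minus_IZR, mult_IZR. fold K.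
      replace (IZR 5 * K * K) with ((s*K)*(s*K)) by (replace (IZR 5) with 5 by reflexivity; nra).
      rewrite E2. ring. }
    apply eq_IZR in E3. apply (no_sq5 (Z.to_nat (Z.abs k)) k (2*A-k)) in E3; lia. }
  assert (Htp : 0 < t) by lra.
  assert (HKp : K * phi * phi = K * phi + K) by (rewrite Rmult_assoc, Hp2; ring).
  assert (Hu1 : 1.618 * t < t * phi) by nra.
  assert (Hu2 : t * phi < 1.61805 * t) by nra.
  assert (P1 : 0 < (1-t)*(phi-1)) by nra.
  assert (P2 : 0 < t*(2-phi)) by nra.
  assert (P3 : 0 < (1-t)*(2-phi)) by nra.
  assert (Hak : a_ k = A) by reflexivity.
  assert (Hbk : b_ k = (A + k)%Z).
  { unfold b_. apply fl. rewrite plus_IZR. fold K. rewrite HA. simpl. lra. }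
  assert (HKp3 : K * phi * phi * phi = 2 * K * phi + K) by (rewrite Rmult_assoc, Rmult_assoc, Hp2; nra).
  assert (Htp2 : t * phi * phi = t * phi + t) by (rewrite Rmult_assoc, Hp2; ring).
  assert (Haa : a_ A = (A + k - 1)%Z) by (unfold a_; go HA K).
  assert (Hba : b_ A = (2*A + k - 1)%Z) by (unfold b_; go HA K).
  assert (Hab : a_ (A+k) = (2*A + k)%Z) by (unfold a_; go HA K).
  assert (Hbb : b_ (A+k) = (3*A + 2*k)%Z) by (unfold b_; go HA K).
  assert (Hb1 : b_ (A+1) = (2*A + k + 2)%Z) by (unfold b_; go HA K).
  assert (Hbb1 : b_ (A+k+1) = (3*A + 2*k + 2)%Z) by (unfold b_; go HA K).
  assert (M1 : m_ (2*A+k-1) = (A+k)%Z) by (unfold m_; replace (floorR (phi * IZR (2*A+k-1))) with ((3*A+2*k-2)%Z) by (symmetry; go HA K); lia).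
  assert (M2 : m_ (3*A+2*k) = (2*A+k+1)%Z) by (unfold m_; replace (floorR (phi * IZR (3*A+2*k))) with ((5*A+3*k)%Z) by (symmetry; go HA K); lia).
  assert (M3 : m_ (2*A+k-2) = (A+k-1)%Z) by (unfold m_; replace (floorR (phi * IZR (2*A+k-2))) with ((3*A+2*k-4)%Z) by (symmetry; go HA K); lia).
  assert (M4 : m_ (3*A+2*k-1) = (2*A+k)%Z) by (unfold m_; replace (floorR (phi * IZR (3*A+2*k-1))) with ((5*A+3*k-2)%Z) by (symmetry; go HA K); lia).
  assert (M5 : m_ (3*A+2*k-2) = (2*A+k-1)%Z) by (unfold m_; replace (floorR (phi * IZR (3*A+2*k-2))) with ((5*A+3*k-4)%Z) by (symmetry; go HA K); lia).
  assert (M6 : m_ (5*A+3*k) = (3*A+2*k)%Z) by (unfold m_; replace (floorR (phi * IZR (5*A+3*k))) with ((8*A+5*k-1)%Z) by (symmetry; go HA K); lia).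
  unfold f_, g_, h_. rewrite Hak, Hbk, Haa, Hab.
  replace (2 * (A + k - 1) + A)%Z with (3*A+2*k-2)%Z by ring.
  replace (2 * (2*A + k) + (A + k))%Z with (5*A+3*k)%Z by ring.
  rewrite Hba, Hbb, Hb1, Hbb1.
  replace (2*A + k - 1 - 1)%Z with (2*A+k-2)%Z by ring.
  rewrite M1, M2, M3, M4, M5, M6.
  repeat split; ring.
Qed.
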